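(* Let $\mathscr H=(V,E)$ be a connected hypergraph, and let $\{a_1,\dots,a_m\}$ and $\{x_1,\dots,x_m\}$ be disjoint sets of hyperedges. Let $\mathbf f$ be a hypertree such that $x_j$ can transfer valence to $a_j$ for all $j$, but $x_j$ cannot transfer valence to $a_i$ for any $i<j$. Then for every subset $J\subset\{1,\dots,m\}$, the vector $\mathbf f+\sum_{j\in J}(\mathbf i_{\{a_j\}}-\mathbf i_{\{x_j\}})$ is a hypertree.
   Context: A hypergraph $(V,E)$ has vertex set $V$ and a finite multiset $E$ of non-empty subsets of $V$ (hyperedges); its bipartite graph has color classes $V$ and $E$ with $v$ joined to $e$ iff $v\in e$, and the hypergraph is connected if this graph is. A hypertree is a function $\mathbf f\colon E\to\mathbf N$ such that some spanning tree of this bipartite graph has degree $\mathbf f(e)+1$ at each $e\in E$. $\mathbf i_{\{e\}}$ is the indicator vector of $e$. Hyperedge $x$ can transfer valence to $y$ at $\mathbf f$ if $\mathbf f-\mathbf i_{\{x\}}+\mathbf i_{\{y\}}$ is a hypertree. *)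

(* Defs.v *)
From mathcomp Require Import all_boot all_order all_algebra.
Set Implicit Arguments. Unset Strict Implicit. Unset Printing Implicit Defensive.
Import GRing.Theory Num.Theory.

(* A hypergraph with finite vertex type V and hyperedges indexed by the finite
   type E (so E is a multiset of subsets of V): H e is the vertex set of e. *)
Definition hypergraph (V E : finType) := E -> {set V}.

Section Hyper.
Variables (V E : finType) (H : hypergraph V E).

Definition hyperedges_nonempty := forall e : E, H e != set0.

Definition bip_edges : {set V * E} := [set p | p.1 \in H p.2].

Definition adj (T : {set V * E}) : rel (V + E) := fun a b =>
  match a, b with
  | inl v, inr e => (v, e) \in T
  | inr e, inl v => (v, e) \in T
  | _, _ => false
  end.

Definition graph_connected (T : {set V * E}) :=
  forall a b : V + E, connect (adj T) a b.

Definition hconnected := graph_connected bip_edges.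

(* spanning tree of the bipartite graph: a set of bipartite edges which is
   connected on all of V + E and minimally so (i.e. acyclic) *)
Definition spanning_tree (T : {set V * E}) :=
  [/\ T \subset bip_edges, graph_connected T &
      forall p, p \in T -> ~ graph_connected (T :\ p)].

Definition tdeg (T : {set V * E}) (e : E) : nat := #|[set v | (v, e) \in T]|.

Definition hypertree (f : E -> int) :=
  exists T, spanning_tree T /\ forall e, ((tdeg T e)%:Z = f e + 1)%R.

Definition ind (e : E) : E -> int := fun e' => ((e == e')%:Z)%R.

Definition can_transfer (f : E -> int) (x y : E) :=
  hypertree (fun e => (f e - ind x e + ind y e)%R).

End Hyper.

(* Main.v *)
Require Import Defs.
From mathcomp Require Import all_boot all_order all_algebra.
Import GRing.Theory Num.Theory.
Set Implicit Arguments. Unset Strict Implicit. Unset Printing Implicit Defensive.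

Lemma adj_of (V E : finType) (X : {set V * E}) v e :
  (v, e) \in X -> adj X (inl v) (inr e) /\ adj X (inr e) (inl v).
Proof. by move=> h; split. Qed.

Lemma adj_cases (V E : finType) (X : {set V * E}) a b : adj X a b ->
  exists v e, (v, e) \in X /\ ((a = inl v /\ b = inr e) \/ (a = inr e /\ b = inl v)).
Proof.
case: a => [v|e]; case: b => [w|f] //= h.
- by exists v, f; split => //; left.
- by exists w, e; split => //; right.
Qed.

Lemma adj_sym (V E : finType) (X : {set V * E}) : symmetric (adj X).
Proof. by case=> [v|e] [w|f]. Qed.

Lemma conn_sym (V E : finType) (X : {set V * E}) a b :
  connect (adj X) a b = connect (adj X) b a.
Proof. exact: (sym_connect_sym (adj_sym X)). Qed.

Lemma conn_sub (V E : finType) (X Y : {set V * E}) a b : X \subset Y ->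
  connect (adj X) a b -> connect (adj Y) a b.
Proof.
move=> sXY; apply: connect_sub => c d /adj_cases [v [e [he hc]]].
apply: connect1; have hY := subsetP sXY _ he.
by case: hc => [[-> ->]|[-> ->]].
Qed.

Lemma conn_inv (V E : finType) (X : {set V * E}) (phi : V + E -> bool) :
  (forall v e, (v, e) \in X -> phi (inl v) = phi (inr e)) ->
  forall a b, connect (adj X) a b -> phi a = phi b.
Proof.
move=> hX a b /connectP [s]; elim: s a => [|c s IH] a /=; first by move=> _ ->.
move=> /andP [hac hp] hb; rewrite -(IH c hp hb).
by case/adj_cases: hac => v [e [he [[-> ->]|[-> ->]]]]; rewrite (hX _ _ he).
Qed.

Lemma conn_edge (V E : finType) (X : {set V * E}) c v e : (v, e) \in X ->
  connect (adj X) c (inl v) = connect (adj X) c (inr e).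
Proof.
move=> h; have [h1 h2] := adj_of h.
apply/idP/idP => hc; apply: connect_trans hc _; exact: connect1.
Qed.

Lemma tree_cut (V E : finType) (H : hypergraph V E) T pv pe :
  spanning_tree H T -> (pv, pe) \in T ->
  ~~ connect (adj (T :\ (pv, pe))) (inl pv) (inr pe).
Proof.
case=> _ hc hmin hp; apply/negP => C; apply: (hmin _ hp) => a b.
apply: (connect_sub _ (hc a b)) => c d /adj_cases [v [e [he hcd]]].
case: (boolP ((v, e) == (pv, pe))) => [/eqP [? ?]|hne]; first subst.
  by case: hcd => [[-> ->]|[-> ->]] //; rewrite conn_sym.
have he' : (v, e) \in T :\ (pv, pe) by rewrite !inE hne.
have [h1 h2] := adj_of he'.
by case: hcd => [[-> ->]|[-> ->]]; apply: connect1.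
Qed.

Lemma tree_sides (V E : finType) (T : {set V * E}) pv pe :
  graph_connected T -> (pv, pe) \in T -> forall w,
  connect (adj (T :\ (pv, pe))) (inl pv) w || connect (adj (T :\ (pv, pe))) (inr pe) w.
Proof.
move=> hc hp w.
pose R w := connect (adj (T :\ (pv, pe))) (inl pv) w || connect (adj (T :\ (pv, pe))) (inr pe) w.
have : R (inl pv) by rewrite /R connect0.
suff -> : R (inl pv) = R w by [].
apply: (conn_inv _ (hc _ _)) => v e he.
case: (boolP ((v, e) == (pv, pe))) => [/eqP [? ?]|hne]; first subst.
  by rewrite /R !connect0 orbT.
have he' : (v, e) \in T :\ (pv, pe) by rewrite !inE hne.
by rewrite /R !(conn_edge _ he').
Qed.

Lemma sides_neq (V E : finType) (H : hypergraph V E) T pv pe c d :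
  spanning_tree H T -> (pv, pe) \in T ->
  ~~ connect (adj (T :\ (pv, pe))) c d ->
  connect (adj (T :\ (pv, pe))) (inl pv) c != connect (adj (T :\ (pv, pe))) (inl pv) d.
Proof.
move=> ht hp ncd; have [_ hc _] := ht.
have sc := tree_sides hc hp c; have sd := tree_sides hc hp d.
apply/negP => /eqP heq; move/negP: ncd; apply.
case Yc: (connect _ (inl pv) c) heq sc sd => /esym Yd /= sc sd.
  by apply: connect_trans Yd; rewrite conn_sym.
rewrite Yd /= in sd; apply: connect_trans sd; by rewrite conn_sym.
Qed.

Lemma swap_tree (V E : finType) (H : hypergraph V E) T pv pe qv qe :
  spanning_tree H T -> (pv, pe) \in T -> (qv, qe) \in bip_edges H ->
  ~~ connect (adj (T :\ (pv, pe))) (inl qv) (inr qe) ->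
  spanning_tree H ((T :\ (pv, pe)) :|: [set (qv, qe)]).
Proof.
move=> ht hp hq nq; have [hsub hc hmin] := ht.
set T' := (T :\ (pv, pe)) :|: [set (qv, qe)].
have sub1 : T :\ (pv, pe) \subset T' by apply: subsetUl.
have qT' : (qv, qe) \in T' by rewrite !inE eqxx orbT.
have hneq := sides_neq ht hp nq.
split.
- apply/subsetP => w; rewrite !inE => /orP [/andP [_ wT]|/eqP ->]; last by move: hq; rewrite !inE.
  by have := subsetP hsub w wT; rewrite !inE.

- have hy : forall w, connect (adj T') (inl pv) w.
    move=> w; case/orP: (tree_sides hc hp w) => hw; first exact: conn_sub hw.
    apply: connect_trans (conn_sub sub1 hw).
    have [a1 a2] := adj_of qT'.
    case Yv: (connect _ (inl pv) (inl qv)) hneq => /= Ye;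
      move: Ye; case Ye: (connect _ (inl pv) (inr qe)) => // _.
    + have Ze : connect (adj (T :\ (pv, pe))) (inr pe) (inr qe).
        by have := tree_sides hc hp (inr qe); rewrite Ye.
      apply: connect_trans (conn_sub sub1 Yv) _.
      apply: connect_trans (connect1 a1) _.
      by rewrite conn_sym; apply: conn_sub Ze.
    + have Zv : connect (adj (T :\ (pv, pe))) (inr pe) (inl qv).
        by have := tree_sides hc hp (inl qv); rewrite Yv.
      apply: connect_trans (conn_sub sub1 Ye) _.
      apply: connect_trans (connect1 a2) _.
      by rewrite conn_sym; apply: conn_sub Zv.
  move=> a b; apply: connect_trans (hy b); by rewrite conn_sym.
- case=> rv re hr hcon.
  case: (boolP ((rv, re) == (qv, qe))) => [/eqP hrq|hrq].
    apply: (hmin _ hp) => a b; apply: conn_sub (hcon a b).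
    apply/subsetP => w; rewrite hrq !inE; case/andP => hw.
    by case/orP => [/andP [h1 h2]|/eqP hw']; [rewrite h1 h2|rewrite hw' eqxx in hw].
  have hrT : (rv, re) \in T :\ (pv, pe).
    by move: hr; rewrite in_setU in_set1 (negbTE hrq) orbF.
  have hrT0 : (rv, re) \in T by move: hrT; rewrite !inE => /andP [].
  have hpr : (pv, pe) != (rv, re).
    by apply/eqP => e0; move: hrT; rewrite -e0 !inE eqxx.
  have hpT : (pv, pe) \in T :\ (rv, re) by rewrite !inE hpr.
  set Y := fun w => connect (adj (T :\ (pv, pe))) (inl pv) w.
  set S := fun w => connect (adj (T :\ (rv, re))) (inl rv) w.
  have cutr := tree_cut ht hrT0.
  have Srr : S (inl rv) by apply: connect0.
  have Sre : S (inr re) = false by apply/negbTE.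
  have Ypp : Y (inl pv) by apply: connect0.
  have Ype : Y (inr pe) = false by apply/negbTE; exact: tree_cut ht hp.
  have Sp : S (inl pv) = S (inr pe) by rewrite /S (conn_edge _ hpT).
  have Hcases : forall v e, (v, e) \in T' :\ (rv, re) ->
      (v, e) = (qv, qe) \/ ((v, e) \in T :\ (pv, pe) /\ (v, e) \in T :\ (rv, re)).
    move=> v e; rewrite !inE; case/andP => h1 /orP [/andP [h2 h3]|/eqP ->]; last by left.
    by right; rewrite h1 h2 h3.
  have Sq : S (inl qv) != S (inr qe).
    apply/negP => /eqP Sq.
    have : S (inl rv) = S (inr re).
      apply: (conn_inv _ (hcon _ _)) => v e /Hcases [[-> ->]//|[_ h]].
      by rewrite /S (conn_edge _ h).
    by rewrite Srr Sre.
  have key : forall v e, (v, e) \in T' :\ (rv, re) ->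
      (Y (inl v) (+) S (inl v)) = (Y (inr e) (+) S (inr e)).
    move=> v e /Hcases [[-> ->]|[h1 h2]].
      by move: hneq Sq; rewrite /Y /S; do 4 case: (connect _ _ _).
    by rewrite /Y /S (conn_edge _ h1) (conn_edge _ h2).
  have := conn_inv (phi := fun w => Y w (+) S w) key (hcon (inl pv) (inr pe)).
  rewrite /=.
  by rewrite Ypp Ype Sp; case: (S _).
Qed.

Lemma tdeg_swap (V E : finType) (T : {set V * E}) pv pe qv qe e :
  (pv, pe) \in T -> (qv, qe) \notin T ->
  tdeg ((T :\ (pv, pe)) :|: [set (qv, qe)]) e + (pe == e) = tdeg T e + (qe == e).
Proof.
move=> hp hq; rewrite /tdeg.
set D := [set v | (v, e) \in T].
have Dp : pe = e -> pv \in D by move=> he; rewrite /D inE -he.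
have Dq : qe = e -> qv \notin D by move=> he; rewrite /D inE -he.
case: (eqVneq pe e) => [hpe|hpe]; case: (eqVneq qe e) => [hqe|hqe].
- have -> : [set v | (v, e) \in (T :\ (pv, pe)) :|: [set (qv, qe)]] = qv |: (D :\ pv).
    apply/setP => v; subst pe qe; rewrite !inE !xpair_eqE eqxx !andbT.
    by rewrite orbC.
  rewrite cardsU1 in_setD1 (negbTE (Dq hqe)) andbF (cardsD1 pv D) (Dp hpe).
  by rewrite /= addnC.
- have -> : [set v | (v, e) \in (T :\ (pv, pe)) :|: [set (qv, qe)]] = D :\ pv.
    apply/setP => v; subst pe; rewrite !inE !xpair_eqE eqxx !andbT.
    by rewrite (eq_sym e qe) (negbTE hqe) andbF orbF.
  by rewrite [#|D|](cardsD1 pv) (Dp hpe) /= addn0 add1n addn1.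
- have -> : [set v | (v, e) \in (T :\ (pv, pe)) :|: [set (qv, qe)]] = qv |: D.
    apply/setP => v; subst qe; rewrite !inE !xpair_eqE eqxx !andbT.
    by rewrite (eq_sym e pe) (negbTE hpe) andbF /= orbC.
  by rewrite cardsU1 (Dq hqe) /= addn0 add1n addn1.
- congr (_ + _); apply: eq_card => v; rewrite !inE !xpair_eqE.
  by rewrite (eq_sym e pe) (eq_sym e qe) (negbTE hpe) (negbTE hqe) !andbF orbF.
Qed.

From mathcomp Require Import zify.

Lemma ht_ext (V E : finType) (H : hypergraph V E) (f g : E -> int) :
  (forall e, f e = g e) -> hypertree H f -> hypertree H g.
Proof. by move=> hfg [T [hT hd]]; exists T; split => // e; rewrite hd hfg. Qed.

Lemma ind_eq (E : finType) (x : E) : ind x x = 1%R.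
Proof. by rewrite /ind eqxx. Qed.
Lemma ind_neq (E : finType) (x e : E) : x != e -> ind x e = 0%R.
Proof. by move=> h; rewrite /ind (negbTE h). Qed.

Lemma exch_step (V E : finType) (H : hypergraph V E) (f g : E -> int) u B1 B2 :
  spanning_tree H B1 -> spanning_tree H B2 ->
  (forall e, (tdeg B1 e)%:Z = f e + 1)%R -> (forall e, (tdeg B2 e)%:Z = g e + 1)%R ->
  (g u < f u)%R ->
  exists B1' qe, [/\ spanning_tree H B1',
     (forall e, (tdeg B1' e)%:Z = f e - ind u e + ind qe e + 1)%R &
     #|B1 :\: B2| = #|B1' :\: B2|.+1].
Proof.
move=> t1 t2 d1 d2 hu.
set D1 := [set v | (v, u) \in B1]; set D2 := [set v | (v, u) \in B2].
have [sD|/subsetPn [pv hp1 hp2]] := boolP (D1 \subset D2).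
  have := subset_leq_card sD; rewrite -/(tdeg B1 u) -/(tdeg B2 u).
  by move: (d1 u) (d2 u) hu; lia.
rewrite !inE in hp1 hp2.
have cut := tree_cut t1 hp1.
have [/existsP [[qv qe] /andP [hq nq]]|hno] :=
  boolP [exists w, (w \in B2) && ~~ connect (adj (B1 :\ (pv, u))) (inl w.1) (inr w.2)];
  last first.
  exfalso; case: t2 => _ c2 _; move/negP: cut; apply.
  apply: (connect_sub _ (c2 _ _)) => c d /adj_cases [v [e [he hcd]]].
  have hc : connect (adj (B1 :\ (pv, u))) (inl v) (inr e).
    by apply/negPn/negP => nc; move/negP: hno; apply; apply/existsP;
       exists (v, e); rewrite he nc.
  by case: hcd => [[-> ->]|[-> ->]] //; rewrite conn_sym.
have hpq : (pv, u) != (qv, qe) by apply/eqP => e0; rewrite e0 hq in hp2.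
have qB1 : (qv, qe) \notin B1.
  by apply/negP => qB; move/negP: nq; apply; apply: connect1 => /=;
     rewrite !inE qB eq_sym hpq.
have qbip : (qv, qe) \in bip_edges H by case: t2 => s _ _; apply: (subsetP s).
have t1' := swap_tree t1 hp1 qbip nq.
exists ((B1 :\ (pv, u)) :|: [set (qv, qe)]), qe; split => //.
  move=> e; have := tdeg_swap e hp1 qB1; rewrite /ind.
  by move: (d1 e); case: (u == e); case: (qe == e); rewrite /=; lia.
rewrite (cardsD1 (pv, u)) !inE hp1 hp2 /= add1n; congr (_.+1).
apply: eq_card => w; rewrite !inE.
case: (eqVneq w (qv, qe)) => [->|hw]; first by rewrite hq /= andbF.
by rewrite orbF; case: (w \notin B2); case: (w != _); case: (w \in B1).
Qed.

Lemma exch (V E : finType) (H : hypergraph V E) (f g : E -> int) u :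
  hypertree H f -> hypertree H g -> (g u < f u)%R ->
  exists v, (f v < g v)%R /\ hypertree H (fun e => f e - ind u e + ind v e)%R.
Proof.
move=> [B1 [t1 d1]] [B2 [t2 d2]].
suff: forall n B1 f u, #|B1 :\: B2| <= n -> spanning_tree H B1 ->
   (forall e, (tdeg B1 e)%:Z = f e + 1)%R -> (g u < f u)%R ->
   exists v, (f v < g v)%R /\ hypertree H (fun e => f e - ind u e + ind v e)%R.
  by move=> h; apply: (h _ B1 f u (leqnn _) t1 d1).
elim=> [|n IH] {}B1 {}f {}u hn {}t1 {}d1 hu;
  have [B1' [qe [t1' d1' card1]]] := exch_step t1 t2 d1 d2 hu.
  by move: hn; rewrite card1.
have [lt|ge] := boolP (f qe < g qe)%R.
  by exists qe; split => //; exists B1'.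
set f' := fun e => (f e - ind u e + ind qe e)%R.
have hu' : (g qe < f' qe)%R.
  rewrite /f' ind_eq; case: (eqVneq u qe) => [<-|hne].
    by rewrite ind_eq; move: hu; lia.
  by rewrite ind_neq //; move: ge; rewrite -Order.TotalTheory.leNgt; lia.
have hn' : #|B1' :\: B2| <= n by move: hn; rewrite card1.
have [v [hv hht]] := IH B1' f' qe hn' t1' d1' hu'.
exists v; split.
  case: (eqVneq qe v) => [hqv|hqv]; first by subst v; move: hv hu'; lia.
  move: hv; rewrite /f'.
  case: (eqVneq u v) => [huv|huv]; first subst v.
    by rewrite ind_eq (ind_neq hqv); move: hu; lia.
  by rewrite !ind_neq //; lia.
by apply: ht_ext hht => e; rewrite /f'; lia.
Qed.

Lemma ind_pos2 (E : finType) (p1 p2 q1 q2 v : E) :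
  (0 < ind p1 v + ind p2 v - ind q1 v - ind q2 v)%R -> v = p1 \/ v = p2.
Proof.
rewrite /ind; case: (eqVneq p1 v) => [->|h1]; first by left.
case: (eqVneq p2 v) => [->|h2]; first by right.
move=> h; exfalso; move: h.
by case: (q1 == v); case: (q2 == v); rewrite /=; lia.
Qed.

Theorem lemma4p5 (V E : finType) (H : hypergraph V E) (m : nat)
    (a x : 'I_m -> E) (f : E -> int) :
  hyperedges_nonempty H -> hconnected H ->
  injective a -> injective x ->
  (forall i j, a i != x j) ->
  hypertree H f ->
  (forall j, can_transfer H f (x j) (a j)) ->
  (forall i j : 'I_m, (i < j)%N -> ~ can_transfer H f (x j) (a i)) ->
  forall J : {set 'I_m},
    hypertree H (fun e => (f e + \sum_(j in J) (ind (a j) e - ind (x j) e))%R).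
Proof.
move=> _ _ ainj xinj hax hf htr hntr.
pose t (K : {set 'I_m}) : E -> int := fun e => (f e + \sum_(j in K) (ind (a j) e - ind (x j) e))%R.
have tD1 : forall (K : {set 'I_m}) (k : 'I_m) (e : E), k \in K ->
    t K e = (t (K :\ k) e + (ind (a k) e - ind (x k) e))%R.
  by move=> K k e hk; rewrite /t (big_setD1 k hk) /= (addrC (ind (a k) e - _)%R) addrA.
have t0 : forall e, t set0 e = f e by move=> e; rewrite /t big_set0 addr0.
have tS : forall j e, t [set j] e = (f e + (ind (a j) e - ind (x j) e))%R.
  by move=> j e; rewrite /t big_set1.
have aa : forall i j, i != j -> a i != a j.
  by move=> i j; apply: contra => /eqP /ainj ->.
have xx : forall i j, i != j -> x i != x j.
  by move=> i j; apply: contra => /eqP /xinj ->.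
have xa : forall i j, x i != a j by move=> i j; rewrite eq_sym.
have neqo : forall i j : 'I_m, (i < j)%N -> i != j.
  by move=> i j hij; apply/eqP => e0; rewrite e0 ltnn in hij.
suff main : forall n (K : {set 'I_m}), #|K| <= n -> hypertree H (t K) /\
   (forall i j : 'I_m, (i < j)%N -> i \notin K -> j \notin K ->
      ~ hypertree H (fun e => t K e - ind (x j) e + ind (a i) e)%R).
  by move=> J; case: (main _ J (leqnn _)).
clearbody t.
have base : forall i j : 'I_m, (i < j)%N ->
    ~ hypertree H (fun e => t set0 e - ind (x j) e + ind (a i) e)%R.
  move=> i j hij hh; apply: (hntr i j hij); rewrite /can_transfer.
  by apply: ht_ext hh => e; rewrite t0.
elim=> [|n IH] K hK.
  have -> : K = set0 by apply/eqP; rewrite -cards_eq0; lia.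
  split; first by apply: ht_ext hf => e; rewrite t0.
  by move=> i j hij _ _; apply: base.
split.
- case: (ltnP 1 #|K|) => [/card_gt1P [c [d [hc hd hcd]]]|le1].
  + have [j1 [j0 [h1 h0 hlt]]] : exists j1 j0, [/\ j1 \in K, j0 \in K & (j1 < j0)%N].
      case: (ltngtP c d) => [lt|lt|eq]; first by exists c, d.
        by exists d, c.
      by move: hcd; rewrite (val_inj eq) eqxx.
    have hne := neqo _ _ hlt.
    have h1' : j1 \in K :\ j0 by rewrite !inE hne.
    have h0' : j0 \in K :\ j1 by rewrite !inE eq_sym hne.
    set K2 := K :\ j0 :\ j1.
    have eK : K :\ j1 :\ j0 = K2 by apply/setP => w; rewrite !inE andbCA.
    have c0 : #|K :\ j0| <= n by move: hK; rewrite (cardsD1 j0 K) h0; lia.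
    have c1 : #|K :\ j1| <= n by move: hK; rewrite (cardsD1 j1 K) h1; lia.
    have c2 : #|K2| <= n.
      by apply: leq_trans c0; apply: subset_leq_card; apply: subD1set.
    have [hf1 _] := IH _ c0; have [hf2 _] := IH _ c1; have [_ hii] := IH _ c2.
    have E1 : forall e, t (K :\ j0) e = (t K2 e + (ind (a j1) e - ind (x j1) e))%R.
      by move=> e; rewrite (tD1 _ j1 e h1').
    have E2 : forall e, t (K :\ j1) e = (t K2 e + (ind (a j0) e - ind (x j0) e))%R.
      by move=> e; rewrite (tD1 _ j0 e h0') eK.
    have EK : forall e, t K e =
        (t K2 e + (ind (a j1) e - ind (x j1) e) + (ind (a j0) e - ind (x j0) e))%R.
      by move=> e; rewrite (tD1 _ j0 e h0) E1.
    have hu : (t (K :\ j1) (x j0) < t (K :\ j0) (x j0))%R.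
      rewrite E1 E2 ind_eq (ind_neq (xx _ _ hne)) (ind_neq (hax j1 j0))
        (ind_neq (hax j0 j0)); lia.
    have [v [hv hht]] := exch hf1 hf2 hu.
    have : v = a j0 \/ v = x j1.
      apply: (@ind_pos2 _ (a j0) (x j1) (x j0) (a j1) v).
      by move: hv; rewrite E1 E2; lia.
    case=> ?; subst v.
      by apply: ht_ext hht => e; rewrite E1 EK; lia.
    exfalso; apply: (hii j1 j0 hlt).
    * by rewrite !inE eqxx /= ?andbF.
    * by rewrite !inE eqxx /= ?andbF.
    by apply: ht_ext hht => e; rewrite E1; lia.
  + have /orP [/eqP c0|/cards1P [j ->]] : (#|K| == 0) || (#|K| == 1) by move: le1; case: #|K| => [|[|]].
      have -> : K = set0 by apply/eqP; rewrite -cards_eq0 c0.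
      by apply: ht_ext hf => e; rewrite t0.
    have := htr j; rewrite /can_transfer; apply: ht_ext => e.
    by rewrite tS; lia.
- move=> i j hij hi hj hs.
  case: (set_0Vmem K) => [K0|[k hk]].
    by move: hs; rewrite K0; apply: base.
  have cK : #|K :\ k| <= n by move: hK; rewrite (cardsD1 k K) hk; lia.
  have hi' : i \notin K :\ k by rewrite !inE negb_and hi orbT.
  have hj' : j \notin K :\ k by rewrite !inE negb_and hj orbT.
  have hki : k != i by apply/eqP => e0; rewrite -e0 hk in hi.
  have hkj : k != j by apply/eqP => e0; rewrite -e0 hk in hj.
  have hk' : k \notin K :\ k by rewrite !inE eqxx.
  have tk := fun e => tD1 K k e hk.
  move: (K :\ k) tk cK hi' hj' hk' => K' tk cK hi' hj' hk'.
  have [hr hii] := IH _ cK.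
  case: (ltngtP k j) => [kj|jk|eq]; last by move: hkj; rewrite (val_inj eq) eqxx.
  + have hu : ((fun e => t K e - ind (x j) e + ind (a i) e)%R (x j) < t K' (x j))%R.
      rewrite /= tk ind_eq (ind_neq (hax k j)) (ind_neq (xx _ _ hkj))
        (ind_neq (hax i j)); lia.
    have [v [hv hht]] := exch hr hs hu.
    have : v = a k \/ v = a i.
      apply: (@ind_pos2 _ (a k) (a i) (x k) (x j) v).
      by move: hv; rewrite /= tk; lia.
    case=> ?; subst v.
      by apply: (hii k j kj hk' hj').
    by apply: (hii i j hij hi' hj').
  + have hik : (i < k)%N by apply: ltn_trans jk.
    have hu : (t K' (a k) < (fun e => t K e - ind (x j) e + ind (a i) e)%R (a k))%R.
      rewrite /= tk ind_eq (ind_neq (xa k k)) (ind_neq (xa j k))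
        (ind_neq (aa _ _ (neqo _ _ hik))); lia.
    have [v [hv hht]] := exch hs hr hu.
    have : v = x k \/ v = x j.
      apply: (@ind_pos2 _ (x k) (x j) (a k) (a i) v).
      by move: hv; rewrite /= tk; lia.
    case=> ?; subst v.
      apply: (hii i j hij hi' hj'); apply: ht_ext hht => e /=.
      by rewrite tk; lia.
    apply: (hii i k hik hi' hk'); apply: ht_ext hht => e /=.
    by rewrite tk; lia.
Qed.
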